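(* Let $n\ge0$ and, for $0\le k\le n$, let $\mathbf b^{(k)}\in\mathbb R^{n+1}$ be given by $\mathbf b^{(k)}_i=\binom{k}{i}$. Define $$\mathbf v^{\pm}_{(k)}=2^{\frac{n-k}{2}}\,\mathbf b^{(k)}\pm2^{\frac k2}\,\mathbf b^{(n-k)}.$$ Then $K^{(n)}\mathbf v^{\pm}_{(k)}=\pm2^{n/2}\,\mathbf v^{\pm}_{(k)}$ for every $k$. Moreover, the vectors $\mathbf v^{+}_{(k)}$ for $0\le k\le n/2$ together with $\mathbf v^{-}_{(k)}$ for $0\le k<n/2$ form a basis of $\mathbb R^{n+1}$; hence $K^{(n)}$ is diagonalizable with eigenvalue $2^{n/2}$ of multiplicity $\lfloor n/2\rfloor+1$ and eigenvalue $-2^{n/2}$ of multiplicity $\lceil n/2\rceil$.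
   Context: For an integer $n\ge 0$, the $n$-th Krawtchouk matrix $K^{(n)}$ is the $(n+1)\times(n+1)$ integer matrix with rows and columns indexed by $0,1,\dots,n$, whose entries are defined by $(1+t)^{n-q}(1-t)^q=\sum_{p=0}^n K^{(n)}_{pq}\,t^p$. *)

(* Defs.v *)
(* Real numbers are modelled by an arbitrary real closed field R
   (which contains sqrt 2); 2^(x/2) is written (Num.sqrt 2)^+x. *)
From HB Require Import structures.
From mathcomp Require Import all_boot all_order all_algebra.
Set Implicit Arguments. Unset Strict Implicit. Unset Printing Implicit Defensive.
Import Order.TTheory GRing.Theory Num.Theory.
Local Open Scope ring_scope.

Definition kraw (R : comNzRingType) (n : nat) : 'M[R]_(n.+1) :=
  \matrix_(p < n.+1, q < n.+1)
    (((1 + 'X) ^+ (n - q) * (1 - 'X) ^+ q : {poly R})`_p).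

Definition bvec (R : comNzRingType) (n k : nat) : 'cV[R]_(n.+1) :=
  \col_(i < n.+1) ('C(k, i))%:R.

Definition vplus (R : rcfType) (n k : nat) : 'cV[R]_(n.+1) :=
  (Num.sqrt (2 : R)) ^+ (n - k) *: bvec R n k + (Num.sqrt (2 : R)) ^+ k *: bvec R n (n - k).
Definition vminus (R : rcfType) (n k : nat) : 'cV[R]_(n.+1) :=
  (Num.sqrt (2 : R)) ^+ (n - k) *: bvec R n k - (Num.sqrt (2 : R)) ^+ k *: bvec R n (n - k).

(* Main.v *)
Require Import Defs.
From HB Require Import structures.
From mathcomp Require Import all_boot all_order all_algebra.
From mathcomp Require Import zify.
Import Order.TTheory GRing.Theory Num.Theory.
Local Open Scope ring_scope.

Section S.
Variable R : rcfType.

Lemma coef1X (m i : nat) : ((1 + 'X : {poly R}) ^+ m)`_i = ('C(m, i))%:R.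
Proof.
elim: m i => [|m IH] i.
  by rewrite expr0 coef1 bin0n; case: i.
rewrite exprSr mulrDr mulr1 coefD coefMX !IH.
case: i => [|i] /=; first by rewrite !bin0 addr0.
by rewrite binS natrD.
Qed.

Lemma polyQ (n k : nat) : (k <= n)%N ->
  \sum_(j < n.+1) ((1 + 'X : {poly R}) ^+ (n - j) * (1 - 'X) ^+ j) *+ 'C(k, j)
  = (2 : {poly R}) ^+ k * (1 + 'X) ^+ (n - k).
Proof.
move=> kn.
have -> : (2 : {poly R}) = (1 + 'X) + (1 - 'X).
  by rewrite addrACA subrr addr0.
rewrite exprDn mulr_suml (big_ord_widen n.+1 (fun j => ((1 + 'X : {poly R}) ^+ (k - j) * (1 - 'X) ^+ j *+ 'C(k, j)) * (1 + 'X) ^+ (n - k))) //.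
rewrite [RHS]big_mkcond /=; apply: eq_bigr => j _.
case: ifP => hj.
  rewrite mulrnAl mulrAC -exprD; congr (_ * _ *+ _); congr (_ ^+ _).
  rewrite ltnS in hj; lia.
by rewrite bin_small ?mulr0n // ltnNge -ltnS hj.
Qed.

Lemma kraw_bvec (n k : nat) : (k <= n)%N ->
  kraw R n *m bvec R n k = (2 : R) ^+ k *: bvec R n (n - k).
Proof.
move=> kn; apply/matrixP => i z; rewrite !mxE.
have H := congr1 (fun p : {poly R} => p`_i) (@polyQ n k kn).
rewrite /= coef_sum in H.
rewrite -[(2 : {poly R})]polyC_natr -rmorphXn coefCM coef1X in H.
rewrite -H; apply: eq_bigr => j _; rewrite !mxE coefMn mulr_natr //.
Qed.

Local Notation s := (Num.sqrt (2 : R)).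

Lemma two_pow (m : nat) : (2 : R) ^+ m = s ^+ (2 * m).
Proof. by rewrite exprM sqr_sqrtr // ler0n. Qed.

Lemma vplus_eig (n k : nat) : (k <= n)%N ->
  kraw R n *m vplus R n k = s ^+ n *: vplus R n k.
Proof.
move=> kn; rewrite /vplus mulmxDr -!scalemxAr !kraw_bvec ?leq_subr // subKn //.
rewrite !scalerA scalerDr !scalerA addrC !two_pow -!exprD.
by congr (_ *: _ + _ *: _); congr (_ ^+ _); lia.
Qed.

Lemma vminus_eig (n k : nat) : (k <= n)%N ->
  kraw R n *m vminus R n k = - s ^+ n *: vminus R n k.
Proof.
move=> kn; rewrite /vminus mulmxBr -!scalemxAr !kraw_bvec ?leq_subr // subKn //.
rewrite !scalerA scalerBr !scalerA !two_pow -!exprD !mulNr !scaleNr -!exprD opprK addrC.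
by congr (- (_ *: _) + _ *: _); congr (_ ^+ _); lia.
Qed.

Definition Xs (n : nat) : seq 'cV[R]_(n.+1) :=
  [seq vplus R n k | k <- iota 0 (n./2).+1] ++
  [seq vminus R n k | k <- iota 0 (uphalf n)].

Lemma size_Xs n : size (Xs n) = n.+1.
Proof. rewrite size_cat !size_map !size_iota uphalfE -!divn2; lia. Qed.

Lemma span_all (n : nat) (S : 'cV[R]_(n.+1) -> Prop) :
  S 0 -> (forall c u v, S u -> S v -> S (c *: u + v)) ->
  (forall x, x \in Xs n -> S x) -> forall v, S v.
Proof.
move=> S0 Sl SX.
have Sadd u v : S u -> S v -> S (u + v).
  by move=> *; rewrite -[u]scale1r; apply: Sl.
have Ssc c u : S u -> S (c *: u).
  by move=> *; rewrite -[_ *: _]addr0; apply: Sl.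
have Ssub u v : S u -> S v -> S (u - v).
  by move=> *; rewrite -scaleN1r; apply: Sadd => //; apply: Ssc.
have Sp k : (k * 2 <= n)%N -> S (vplus R n k).
  move=> hk; apply: SX; rewrite mem_cat; apply/orP; left; apply: map_f.
  rewrite mem_iota -divn2; lia.
have Sm k : (k * 2 < n)%N -> S (vminus R n k).
  move=> hk; apply: SX; rewrite mem_cat; apply/orP; right; apply: map_f.
  rewrite mem_iota uphalfE -divn2; lia.
have spos m : 0 < s ^+ m + s ^+ m.
  by rewrite addr_gt0 // exprn_gt0 // sqrtr_gt0 ltr0n.
have inv c v : c != 0 -> S (c *: v) -> S v.
  by move=> hc hv; rewrite -[v]scale1r -(mulVf hc) -scalerA; apply: Ssc.
have Hpm k : vplus R n k + vminus R n k = (s ^+ (n - k) + s ^+ (n - k)) *: bvec R n k.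
  by rewrite /vplus /vminus addrACA subrr addr0 scalerDl.
have Hmm k : vplus R n k - vminus R n k = (s ^+ k + s ^+ k) *: bvec R n (n - k).
  by rewrite /vplus /vminus opprB addrC addrA subrK scalerDl.
have Sb j : (j <= n)%N -> S (bvec R n j).
  move=> jn; case: (ltngtP (j * 2) n) => hj.
  - apply: (inv (s ^+ (n - j) + s ^+ (n - j))); first by rewrite lt0r_neq0.
    rewrite -Hpm; apply: Sadd; [apply: Sp | apply: Sm]; lia.
  - have -> : j = (n - (n - j))%N by lia.
    apply: (inv (s ^+ (n - j) + s ^+ (n - j))); first by rewrite lt0r_neq0.
    rewrite -Hmm; apply: Ssub; [apply: Sp | apply: Sm]; lia.
  - apply: (inv (s ^+ j + s ^+ j)); first by rewrite lt0r_neq0.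
    have : S (vplus R n j) by apply: Sp; lia.
    by rewrite /vplus (_ : (n - j = j)%N) ?scalerDl //; lia.
suff H : forall m, (m <= n.+1)%N -> forall v : 'cV[R]_(n.+1),
    (forall i : 'I_n.+1, (m <= i)%N -> v i 0 = 0) -> S v.
  by move=> v; apply: (H n.+1) => // i; rewrite leqNgt ltn_ord.
elim=> [_ v hv | m IH hm v hv].
  have -> : v = 0 by apply/matrixP => i j; rewrite (ord1 j) mxE hv.
  exact: S0.
have -> : v = v (inord m) 0 *: bvec R n m + (v - v (inord m) 0 *: bvec R n m).
  by rewrite addrC subrK.
apply: Sl; first by apply: Sb; lia.
apply: IH; first lia.
move=> i hi; rewrite /bvec !mxE.
case: (ltngtP m i) => him.
- by rewrite (hv i) // (bin_small him) mulr0 subr0.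
- lia.
- have -> : inord m = i by apply: val_inj; rewrite /= inordK // -him.
  by rewrite -him binn mulr1 subrr.
Qed.
End S.

Theorem mainTheorem13 (R : rcfType) (n : nat) :
  let a : R := (Num.sqrt (2 : R)) ^+ n in
  (forall k : nat, (k <= n)%N ->
     kraw R n *m vplus R n k = a *: vplus R n k /\
     kraw R n *m vminus R n k = - a *: vminus R n k) /\
  basis_of fullv
    ([seq vplus R n k | k <- iota 0 (n./2).+1] ++
     [seq vminus R n k | k <- iota 0 (uphalf n)]) /\
  diagonalizable (kraw R n) /\
  char_poly (kraw R n) = ('X - a%:P) ^+ (n./2).+1 * ('X + a%:P) ^+ (uphalf n) /\
  \rank (eigenspace (kraw R n) a) = (n./2).+1 /\
  \rank (eigenspace (kraw R n) (- a)) = uphalf n.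
Proof.
move=> a.
have eig : forall k : nat, (k <= n)%N ->
     kraw R n *m vplus R n k = a *: vplus R n k /\
     kraw R n *m vminus R n k = - a *: vminus R n k.
  by move=> k kn; split; [apply: vplus_eig | apply: vminus_eig].
split=> //.
change ([seq vplus R n k | k <- iota 0 (n./2).+1] ++
     [seq vminus R n k | k <- iota 0 (uphalf n)]) with (Xs R n).
set X := Xs R n.
set K := kraw R n.
set p := (n./2).+1.
set q := uphalf n.
have pq : (p + q = n.+1)%N by rewrite /p /q uphalfE -!divn2; lia.
split.
  rewrite basisEdim size_Xs dimvf /dim /= muln1 leqnn andbT.
  apply/subvP => v _; apply: (@span_all R n (fun v => v \in <<X>>%VS)).
  - exact: mem0v.
  - by move=> c u w hu hw; rewrite memvD // memvZ.
  - by move=> x hx; apply: memv_span.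
pose d := \row_(j < n.+1) (if (j < p)%N then a else - a).
have Xeig : forall j : 'I_n.+1, K *m X`_j = d 0 j *: X`_j.
  move=> j; rewrite mxE /X /Xs -/p -/q nth_cat size_map size_iota.
  case: ifP => hj.
    rewrite (nth_map 0%N) ?size_iota // nth_iota // add0n.
    by apply: (eig _ _).1; have := ltn_ord j; lia.
  move/negbT: hj; rewrite -leqNgt => hj.
  rewrite (nth_map 0%N) ?size_iota; last by have := ltn_ord j; lia.
  rewrite nth_iota ?add0n; last by have := ltn_ord j; lia.
  by apply: (eig _ _).2; have := ltn_ord j; lia.
pose W : 'M[R]_(n.+1) := \matrix_(i, j) (X`_j) i 0.
pose D : 'M[R]_(n.+1) := diag_mx d.
have KW : K *m W = W *m D.
  apply/matrixP => i j; rewrite mul_mx_diag !mxE.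
  transitivity ((K *m X`_j) i 0).
    rewrite mxE; apply: eq_bigr => l _; congr (_ * _); rewrite /W mxE //.
  apply: etrans (congr1 (fun M : 'cV[R]_(n.+1) => M i 0) (Xeig j)) _.
  by rewrite /= mxE /d mxE mulrC.
have Wunit : W \in unitmx.
  rewrite -unitmx_tr -row_full_unit -sub1mx; apply/row_subP => i.
  rewrite -[row i _]trmxK.
  apply: (@span_all R n (fun v => (v^T <= W^T)%MS)).
  - by rewrite trmx0 sub0mx.
  - by move=> c u v hu hv; rewrite linearD linearZ /= addmx_sub // scalemx_sub.
  - move=> x /(nthP 0) [j]; rewrite size_Xs => hj <-.
    have -> : (X`_j)^T = row (Ordinal hj) W^T.
      by apply/rowP => l; rewrite !mxE.
    exact: row_sub.
set P := invmx W.
have PK : P *m K = D *m P.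
  rewrite -[P *m K]mulmx1 -(mulmxV Wunit) -/P !mulmxA -(mulmxA P K W) KW.
  by rewrite mulmxA mulVmx // mul1mx.
split.
  exists P; first by rewrite unitmx_inv.
  by apply/similar_diagPex; exists d; apply/similarP; rewrite ?unitmx_inv.
split.
  have -> : char_poly K = char_poly D.
    pose W' := map_mx polyC W.
    have E : char_poly_mx K *m W' = W' *m char_poly_mx D.
      rewrite /char_poly_mx mulmxBl mulmxBr scalar_mxC -!map_mxM KW //.
    apply: (@mulIf _ (\det W')).
      by rewrite /W' det_map_mx polyC_eq0 -unitfE -unitmxE.
    by rewrite /char_poly -det_mulmx E det_mulmx mulrC.
  rewrite char_poly_trig ?diag_mx_is_trig //.
  under eq_bigr => i _ do rewrite /D mxE eqxx mulr1n /d mxE.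
  rewrite -(big_mkord xpredT (fun i : nat => 'X - (if (i < p)%N then a else - a)%:P)).
  rewrite (big_cat_nat (n := p)) //=; last by lia.
  rewrite (eq_big_nat _ _ (F2 := fun=> 'X - a%:P)); last first.
    by move=> i /andP [_ ->].
  rewrite [X in _ * X](eq_big_nat _ _ (F2 := fun=> 'X + a%:P)); last first.
    by move=> i /andP [hi _]; rewrite ltnNge hi /= polyCN opprK.
  rewrite !prodr_const_nat subn0; congr (_ * _ ^+ _); lia.
have pn : (p <= n.+1)%N by lia.
have apos : 0 < a by rewrite exprn_gt0 // sqrtr_gt0 ltr0n.
have Dp : (pid_mx p : 'M[R]_(n.+1)) *m D = a *: pid_mx p.
  apply/matrixP => i j; rewrite mul_mx_diag !mxE.
  case: (eqVneq i j) => [<-|nij].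
    by case: ifP => hi; rewrite ?eqxx /= ?mul1r ?mulr1 ?mul0r ?mulr0.
  have nij' : (i == j :> nat) = false by apply/negbTE.
  by rewrite nij' /= mul0r mulr0.
have Dm : copid_mx p *m D = - a *: copid_mx p.
  apply/matrixP => i j; rewrite mul_mx_diag !mxE.
  case: (eqVneq i j) => [<-|nij].
    by case: ifP => hi; rewrite ?eqxx /= ?subrr ?subr0 ?mul1r ?mulr1 ?mul0r ?mulr0.
  have nij' : (i == j :> nat) = false by apply/negbTE.
  by rewrite nij' ?(negbTE nij) /= subrr mul0r mulr0.
have Pfree : row_free P by rewrite row_free_unit unitmx_inv.
have lb1 : (p <= \rank (eigenspace K a))%N.
  have <- : \rank ((pid_mx p : 'M[R]_(n.+1)) *m P) = p by rewrite mxrankMfree // rank_pid_mx.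
  apply: mxrankS; apply/eigenspaceP.
  by rewrite -mulmxA PK mulmxA Dp scalemxAl.
have lb2 : (q <= \rank (eigenspace K (- a)))%N.
  have <- : \rank (copid_mx p *m P) = q.
    by rewrite mxrankMfree // rank_copid_mx //; lia.
  apply: mxrankS; apply/eigenspaceP.
  by rewrite -mulmxA PK mulmxA Dm scalemxAl.
have cap0 : \rank (eigenspace K a :&: eigenspace K (- a))%MS = 0%N.
  set C := (eigenspace K a :&: eigenspace K (- a))%MS.
  have /eigenspaceP h1 : (C <= eigenspace K a)%MS by apply: capmxSl.
  have /eigenspaceP h2 : (C <= eigenspace K (- a))%MS by apply: capmxSr.
  have : (a + a) *: C = 0.
    by rewrite scalerDl -{1}h1 h2 scaleNr addNr.
  move/eqP; rewrite scalemx_eq0 => /orP [|/eqP ->]; last by rewrite mxrank0.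
  by rewrite gt_eqF // addr_gt0.
have ub := mxrank_sum_cap (eigenspace K a) (eigenspace K (- a)).
have ub2 := rank_leq_col (eigenspace K a + eigenspace K (- a))%MS.
rewrite cap0 addn0 in ub.
split; lia.
Qed.
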